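(* Let $T$ be a non-star tree containing an edge $xy$ with $d_T(x)=1$ and $d_T(y)\ge 3$. Suppose that for every neighbor $y'\ne x$ of $y$, the tree $T_{(y',y)}$ is a neighbor $F$-tree of $y$ which is not a single vertex (i.e. not isomorphic to $P_1$). Then there exists a $(T,x)$-good 2-placement.
   Context: All graphs are finite, simple and undirected; $P_k$ is the path on $k$ vertices. A non-star tree is a tree not isomorphic to a star $K_{1,m}$ for any $m\ge0$. For an edge $ab$ of a tree $T$, $T_{(a,b)}$ denotes the connected component containing $a$ in $T-\{ab\}$; it is a neighbor $F$-tree of $b$ if it is a path with at most $3$ vertices and, when it has exactly $3$ vertices, $a$ is an end vertex of it. A permutation $\sigma$ of $V(T)$ is a 2-placement of $T$ if $\sigma(a)\sigma(b)\notin E(T)$ for every edge $ab\in E(T)$; $\sigma(T)\subseteq T^k$ means $dist_T(\sigma(a),\sigma(b))\le k$ for every edge $ab$ of $T$. A fixed-point-free permutation $\sigma$ of $V(T)$ is a $(T,x)$-good 2-placement if (distances and degrees in $T$): (1) $\sigma$ is a 2-placement of $T$; (2) $\sigma(T)\subseteq T^5$; (3) $dist(x,\sigma(x))=1$; (4) $dist(w,\sigma(w))\le 2$ for every neighbor $w$ of $x$; (5) $dist(w,\sigma(w))\le 4$ for every $w$ of degree $1$. *)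

(* Defs.v *)
From mathcomp Require Import all_boot perm.
Set Implicit Arguments. Unset Strict Implicit. Unset Printing Implicit Defensive.

Section Graphs.
Variables (T : finType) (e : rel T).

Definition simple_graph : Prop := symmetric e /\ irreflexive e.

Definition is_tree : Prop :=
  simple_graph /\ (forall u v : T, connect e u v) /\
  ~ (exists s : seq T, [&& uniq s, 3 <= size s & cycle e s]).

Definition deg (v : T) : nat := #|[set w | e v w]|.

Fixpoint walkn (k : nat) (u v : T) : bool :=
  if k is k'.+1 then [exists z, e u z && walkn k' z v] else u == v.

(* graph distance: least k with a walk of length k (#|T| if unreachable) *)
Definition dist (u v : T) : nat := find (fun k => walkn k u v) (iota 0 #|T|).

Definition star_rel (m : nat) : rel 'I_m.+1 :=
  fun i j => (i != j) && ((val i == 0) || (val j == 0)).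

Definition is_star : Prop :=
  exists m, exists f : T -> 'I_m.+1,
    bijective f /\ forall u v, e u v = star_rel (f u) (f v).

Definition rem_edge (a b : T) : rel T :=
  fun u v => e u v && ~~ (((u == a) && (v == b)) || ((u == b) && (v == a))).

(* vertex set of T_(a,b): the component of a in T - {ab} *)
Definition Tcomp (a b : T) : {set T} := [set v | connect (rem_edge a b) a v].

Definition induced_path_seq (S : {set T}) (s : seq T) : Prop :=
  [/\ uniq s, S = [set z in s],
      (if s is z :: s' then path e z s' else False) &
      forall u v, u \in S -> v \in S -> e u v ->
        exists i, i.+1 < size s /\
          ((nth u s i == u) && (nth u s i.+1 == v) ||
           (nth u s i == v) && (nth u s i.+1 == u))].

Definition neighbor_F_tree (a b : T) : Prop :=
  exists s, induced_path_seq (Tcomp a b) s /\ #|Tcomp a b| <= 3 /\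
    (#|Tcomp a b| = 3 -> (head a s = a \/ last a s = a)).

Definition two_placement (sigma : {perm T}) : Prop :=
  forall a b, e a b -> ~~ e (sigma a) (sigma b).

Definition good_2placement (x : T) (sigma : {perm T}) : Prop :=
  (forall v, sigma v != v) /\
  [/\ two_placement sigma,
      (forall a b, e a b -> dist (sigma a) (sigma b) <= 5),
      dist x (sigma x) = 1,
      (forall w, e x w -> dist w (sigma w) <= 2) &
      (forall w, deg w = 1 -> dist w (sigma w) <= 4)].

End Graphs.

(* Main.v *)
Require Import Defs.
From mathcomp Require Import all_boot perm.
Set Implicit Arguments. Unset Strict Implicit. Unset Printing Implicit Defensive.

Section S.
Variables (T : finType) (e : rel T) (x y : T).
Hypothesis tree : is_tree e.
Hypothesis exy : e x y.
Hypothesis dx : deg e x = 1.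
Hypothesis dy : 3 <= deg e y.
Hypothesis legs : forall y', e y y' -> y' != x ->
     neighbor_F_tree e y' y /\ #|Tcomp e y' y| != 1.

Lemma esym : symmetric e. Proof. by case: tree => [[]]. Qed.
Lemma eirr : irreflexive e. Proof. by case: tree => [[]]. Qed.
Lemma acyc : ~ (exists s : seq T, [&& uniq s, 3 <= size s & cycle e s]).
Proof. by case: tree => _ []. Qed.
Lemma econn u v : connect e u v. Proof. by case: tree => _ []. Qed.

Lemma neq_e u v : e u v -> u != v.
Proof. by move=> h; apply/eqP => E; rewrite E eirr in h. Qed.

Lemma x_nbr w : e x w -> w = y.
Proof.
move=> hw; move: dx; rewrite /deg => /eqP /cards1P [z Hz].
have: w \in [set z] by rewrite -Hz inE.
have: y \in [set z] by rewrite -Hz inE.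
by rewrite !inE => /eqP -> /eqP ->.
Qed.

Definition Nb := [set a | e y a & a != x].
Definition S a := Tcomp e a y.
Definition long a := #|S a| == 3.

Lemma y_notin_S a : e y a -> y \notin S a.
Proof.
move=> hya; apply/negP; rewrite inE => /connectP [p pp lp].
move: lp; case/shortenP: pp => p' pp' up' _ lp'.
apply: acyc; exists (a :: p').
case: p' pp' up' lp' => [|z [|w q]] pp' up' lp'.
- by rewrite /= in lp'; rewrite lp' eirr in hya.
- by rewrite /= in lp'; move: pp'; rewrite /= -lp' /rem_edge !eqxx /= andbF.
rewrite up' /= /cycle rcons_path.
rewrite /= in lp'; rewrite -lp' hya !andbT.

apply: sub_path pp' => u v; by rewrite /rem_edge => /andP[].
Qed.

Lemma in_S a : a \in S a.
Proof. by rewrite inE connect0. Qed.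

Lemma S_closed a u w : e y a -> u \in S a -> e u w -> w != y -> w \in S a.
Proof.
move=> hya hu huw wy.
have uy : u != y.
  by apply/eqP => E; rewrite E (negbTE (y_notin_S hya)) in hu.
move: hu; rewrite !inE => hu; apply: connect_trans hu _; apply: connect1.
by rewrite /rem_edge huw /= (negbTE uy) (negbTE wy) !andbF.
Qed.

Lemma leg_struct a : a \in Nb -> exists b, [/\ e a b, b \in S a, b != a &
   (~~ long a /\ S a = [set a; b]) \/
   (exists c, [/\ long a, S a = [set a; b; c], e b c, ~~ e a c & (c != a) && (c != b)])].
Proof.
move=> Ha; move: (Ha); rewrite inE => /andP[hya hax].
case: (legs hya hax) => [[s [[us Ss ps cl] [c3 hd]]] c1].
rewrite -/(S a) in Ss c3 hd c1.
have cs: #|S a| = size s by rewrite Ss cardsE; apply/card_uniqP.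
have aS := in_S a. rewrite Ss inE in aS.
rewrite /long cs.
case: s us Ss ps cl hd cs aS => [|p [|q [|r [|t s']]]] //= us Ss ps cl hd cs aS.
- by rewrite cs in c1.
- move: us; rewrite !inE andbT => pq; rewrite andbT in ps.
  rewrite !inE in aS; case/orP: aS => /eqP E; subst.
  + exists q; split.
    * done.
    * by rewrite Ss !inE eqxx orbT.
    * by rewrite eq_sym.
    * by left; split => //; apply/setP => z; rewrite Ss !inE.
  + exists p; split.
    * by rewrite esym.
    * by rewrite Ss !inE eqxx.
    * done.
    * by left; split => //; apply/setP => z; rewrite Ss !inE orbC.
- move: us; rewrite !inE negb_or andbT => /andP[/andP[pq pr] qr].
  rewrite andbT in ps; case/andP: ps => pq' qr'.
  have rS : r \in S a by rewrite Ss !inE eqxx !orbT.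
  have pS : p \in S a by rewrite Ss !inE eqxx.
  case: (hd cs) => E; subst.
  + exists q; split.
    * done.
    * by rewrite Ss !inE eqxx orbT.
    * by rewrite eq_sym.
    right; exists r; split => //.
    * by apply/setP => z; rewrite Ss !inE orbA.
    * apply/negP => ar; case: (cl _ _ pS rS ar) => [[|[|i]] [Hi]] //=.
      - by move=> /orP[] /andP[/eqP E1 /eqP E2]; move: pq pr qr; rewrite ?E1 ?E2 ?eqxx ?andbF.
      - by move=> /orP[] /andP[/eqP E1 /eqP E2]; move: pq pr qr; rewrite ?E1 ?E2 ?eqxx ?andbF.
    * by rewrite eq_sym pr eq_sym qr.
  + exists q; split.
    * by rewrite esym.
    * by rewrite Ss !inE eqxx orbT.
    * done.
    right; exists p; split => //.
    * by apply/setP => z; rewrite Ss !inE; case: (z == p); case: (z == q); case: (z == a).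
    * by rewrite esym.
    * apply/negP => ar; case: (cl _ _ rS pS ar) => [[|[|i]] [Hi]] //=.
      - by move=> /orP[] /andP[/eqP E1 /eqP E2]; move: pq pr qr; rewrite ?E1 ?E2 ?eqxx ?andbF.
      - by move=> /orP[] /andP[/eqP E1 /eqP E2]; move: pq pr qr; rewrite ?E1 ?E2 ?eqxx ?andbF.
    * by rewrite pr pq.
- by move: c3; rewrite cs.
Qed.


Lemma S_closed' a u w : e y a -> u \in S a -> e u w -> (u != a) || (w != y) -> w \in S a.
Proof.
move=> hya hu huw hn.
have uy : u != y.
  by apply/eqP => E; rewrite E (negbTE (y_notin_S hya)) in hu.
move: hu; rewrite !inE => hu; apply: connect_trans hu _; apply: connect1.
rewrite /rem_edge huw /= (negbTE uy) /= orbF.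
by case/orP: hn => /negbTE ->; rewrite ?andbF.
Qed.

Definition beta a := odflt a [pick z in S a | e a z].
Definition gam a := odflt a [pick z in S a | (z != a) && (z != beta a)].

Lemma beta_gam a : a \in Nb ->
  [/\ e a (beta a), beta a \in S a, beta a != a,
      (~~ long a -> S a = [set a; beta a]) &
      (long a -> [/\ S a = [set a; beta a; gam a], e (beta a) (gam a),
                     ~~ e a (gam a) & (gam a != a) && (gam a != beta a)])].
Proof.
move=> Ha; case: (leg_struct Ha) => b [ab bS ba H].
have Eb : beta a = b.
  rewrite /beta; case: pickP => [z /andP[zS az] | none] /=.
  - case: H => [[_ Sa]|[c [_ Sa _ nac _]]]; move: zS; rewrite Sa !inE.
    + by case/orP => /eqP E; subst => //; rewrite eirr in az.
    + case/orP => [/orP[]|] /eqP E; subst => //; first by rewrite eirr in az.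
      by rewrite az in nac.
  - by move: (none b); rewrite bS ab.
rewrite Eb; case: H => [[nl Sa]|[c [l Sa bc nac /andP[ca cb]]]].
- by split => // l; rewrite l in nl.
have Ec : gam a = c.
  rewrite /gam Eb; case: pickP => [z /andP[zS /andP[za zb]] | none] /=.
  - move: zS; rewrite Sa !inE (negbTE za) (negbTE zb) /=.
    by move/eqP.
  - by move: (none c); rewrite Sa !inE eqxx !orbT ca cb.
rewrite Ec; split => //; first by rewrite l.
by move=> _; split => //; rewrite ca cb.
Qed.

Lemma y_notin_SN a : a \in Nb -> y \notin S a.
Proof. by rewrite inE => /andP[h _]; apply: y_notin_S. Qed.

Lemma eyN a : a \in Nb -> e y a.
Proof. by rewrite inE => /andP[]. Qed.

Lemma S_mem a v : a \in Nb -> v \in S a -> [\/ v = a, v = beta a | long a /\ v = gam a].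
Proof.
move=> Ha; case: (beta_gam Ha) => _ _ _ H1 H2.
case L: (long a).
- case: (H2 L) => -> _ _ _; rewrite !inE -orbA.
  by case/or3P => /eqP ->; [apply: Or31|apply: Or32|apply: Or33].
- rewrite H1 ?L // !inE; by case/orP => /eqP ->; [apply: Or31|apply: Or32].
Qed.

Lemma inA a : a \in S a. Proof. exact: in_S. Qed.
Lemma inB a : a \in Nb -> beta a \in S a. Proof. by case/beta_gam. Qed.
Lemma inC a : a \in Nb -> long a -> gam a \in S a.
Proof. by move=> Ha L; case: (beta_gam Ha) => _ _ _ _ /(_ L) [-> _ _ _]; rewrite !inE eqxx !orbT. Qed.
Lemma eAB a : a \in Nb -> e a (beta a). Proof. by case/beta_gam. Qed.
Lemma nBA a : a \in Nb -> beta a != a. Proof. by case/beta_gam. Qed.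
Lemma eBC a : a \in Nb -> long a -> e (beta a) (gam a).
Proof. by move=> Ha L; case: (beta_gam Ha) => _ _ _ _ /(_ L) []. Qed.
Lemma nAC a : a \in Nb -> long a -> ~~ e a (gam a).
Proof. by move=> Ha L; case: (beta_gam Ha) => _ _ _ _ /(_ L) []. Qed.
Lemma nCA a : a \in Nb -> long a -> gam a != a.
Proof. by move=> Ha L; case: (beta_gam Ha) => _ _ _ _ /(_ L) [_ _ _ /andP[]]. Qed.
Lemma nCB a : a \in Nb -> long a -> gam a != beta a.
Proof. by move=> Ha L; case: (beta_gam Ha) => _ _ _ _ /(_ L) [_ _ _ /andP[]]. Qed.

Lemma Sny a v : a \in Nb -> v \in S a -> v != y.
Proof.
move=> Ha vS; apply/eqP => E; subst.
by rewrite (negbTE (y_notin_SN Ha)) in vS.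
Qed.

Lemma ex w : e x w = (w == y).
Proof. by apply/idP/eqP => [/x_nbr|->]. Qed.

Lemma Snx a v : a \in Nb -> v \in S a -> v != x.
Proof.
move=> Ha vS; apply/eqP => E; subst.
case: (S_mem Ha vS) => [E|E|[L E]].
- by move: Ha; rewrite inE -E eqxx andbF.
- have := eAB Ha; rewrite -E esym ex => /eqP E'.
  by move: (Sny Ha (inA a)); rewrite E' eqxx.
- have := eBC Ha L; rewrite -E esym ex => /eqP E'.
  by move: (Sny Ha (inB Ha)); rewrite E' eqxx.
Qed.

Lemma S_disj a a' v : a \in Nb -> a' \in Nb -> v \in S a -> v \in S a' -> a = a'.
Proof.
move=> Ha Ha' vS vS'.
case: (eqVneq a a') => // neq.
have hya' := eyN Ha'.
have aS' : a \in S a'.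
  case: (S_mem Ha vS) => [E|E|[L E]]; subst => //.
  - apply: (S_closed' hya' vS'); first by rewrite esym eAB.
    by rewrite (Sny Ha (inA a)) orbT.
  - have bS' : beta a \in S a'.
      apply: (S_closed' hya' vS'); first by rewrite esym eBC.
      by rewrite (Sny Ha (inB Ha)) orbT.
    apply: (S_closed' hya' bS'); first by rewrite esym eAB.
    by rewrite (Sny Ha (inA a)) orbT.
have : y \in S a'.
  apply: (S_closed' hya' aS'); first by rewrite esym eyN.
  by rewrite neq.
by rewrite (negbTE (y_notin_SN Ha')).
Qed.

Lemma cross u w a a' : a \in Nb -> a' \in Nb -> u \in S a -> w \in S a' -> e u w -> a = a'.
Proof.
move=> Ha Ha' uS wS huw.
apply: (S_disj Ha Ha' _ wS).
apply: (S_closed' (eyN Ha) uS huw).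
by rewrite (Sny Ha' wS) orbT.
Qed.

Lemma yS a v : a \in Nb -> v \in S a -> e y v -> v = a.
Proof.
move=> Ha vS hyv; case: (eqVneq v a) => // va.
have : y \in S a by apply: (S_closed' (eyN Ha) vS); [rewrite esym | rewrite va].
by rewrite (negbTE (y_notin_SN Ha)).
Qed.

Lemma path_rem a b u p : path e u p -> b \notin u :: p -> path (rem_edge e a b) u p.
Proof.
elim: p u => [|z p IH] u //= /andP[huz pz].
rewrite !inE !negb_or => /andP[bu /andP[bz bp]].
rewrite IH ?inE ?negb_or ?bz ?bp // andbT /rem_edge huz /=.
by rewrite (eq_sym z b) (negbTE bz) (eq_sym u b) (negbTE bu) !andbF.
Qed.

Lemma partition v : [\/ v = x, v = y | exists2 a, a \in Nb & v \in S a].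
Proof.
case: (eqVneq v y) => [->|vy]; first by apply: Or32.
case/connectP: (econn y v) => p pp lp.
move: lp; case/shortenP: pp => p' pp' up' _ lp'.
case: p' pp' up' lp' => [|w q] pp' up' lp'.
  by rewrite /= in lp'; rewrite lp' eqxx in vy.
case/andP: pp' => hyw pq.
case: (eqVneq w x) => [Ew|wx].
- subst w; case: q pq up' lp' => [|z q] pq up' lp'; first by apply: Or31.
  case/andP: pq => /x_nbr E _; subst z.
  by move: up'; rewrite /= !inE eqxx !orbT.
- apply: Or33; exists w; first by rewrite inE hyw wx.
  rewrite inE; apply/connectP; exists q => //.
  apply: path_rem => //.
  by move: up'; rewrite /= => /andP[].
Qed.

Definition root v := odflt v [pick a in Nb | v \in S a].

Lemma rootE a v : a \in Nb -> v \in S a -> root v = a.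
Proof.
move=> Ha vS; rewrite /root; case: pickP => [a' /andP[Ha' vS'] | none] /=.
- exact: S_disj Ha' Ha vS' vS.
- by move: (none a); rewrite Ha vS.
Qed.

Lemma Nny a : a \in Nb -> a != y. Proof. by move=> Ha; exact: Sny Ha (inA a). Qed.
Lemma Nnx a : a \in Nb -> a != x. Proof. by rewrite inE => /andP[]. Qed.
Lemma xny : x != y. Proof. exact: neq_e exy. Qed.

Definition tag v := if v == x then 0 else if v == y then 1 else
  if v == root v then 2 else if v == beta (root v) then 3 else 4.

Lemma tagX : tag x = 0. Proof. by rewrite /tag eqxx. Qed.
Lemma tagY : tag y = 1. Proof. by rewrite /tag eq_sym (negbTE xny) eqxx. Qed.
Lemma rootA a : a \in Nb -> root a = a. Proof. by move=> Ha; apply: rootE Ha (inA a). Qed.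
Lemma rootB a : a \in Nb -> root (beta a) = a. Proof. by move=> Ha; apply: rootE Ha (inB Ha). Qed.
Lemma rootC a : a \in Nb -> long a -> root (gam a) = a.
Proof. by move=> Ha L; apply: rootE Ha (inC Ha L). Qed.
Lemma tagA a : a \in Nb -> tag a = 2.
Proof. by move=> Ha; rewrite /tag (negbTE (Nnx Ha)) (negbTE (Nny Ha)) rootA // eqxx. Qed.
Lemma tagB a : a \in Nb -> tag (beta a) = 3.
Proof.
move=> Ha; rewrite /tag (negbTE (Snx Ha (inB Ha))) (negbTE (Sny Ha (inB Ha))) rootB //.
by rewrite (negbTE (nBA Ha)) eqxx.
Qed.
Lemma tagC a : a \in Nb -> long a -> tag (gam a) = 4.
Proof.
move=> Ha L; rewrite /tag (negbTE (Snx Ha (inC Ha L))) (negbTE (Sny Ha (inC Ha L))) rootC //.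
by rewrite (negbTE (nCA Ha L)) (negbTE (nCB Ha L)).
Qed.

Inductive kind_spec : T -> Prop :=
| KX : kind_spec x
| KY : kind_spec y
| KA a of a \in Nb : kind_spec a
| KB a of a \in Nb : kind_spec (beta a)
| KC a of a \in Nb & long a : kind_spec (gam a).

Lemma kindP v : kind_spec v.
Proof.
case: (partition v) => [->|->|[a Ha vS]]; [exact: KX | exact: KY |].
case: (S_mem Ha vS) => [->|->|[L ->]]; [exact: KA | exact: KB | exact: KC].
Qed.


Definition adjk u v := match tag u, tag v with
 | 0, 1 | 1, 0 | 1, 2 | 2, 1 => true
 | 2, 3 | 3, 2 | 3, 4 | 4, 3 => root u == root v
 | _, _ => false end.

Ltac tsimp := rewrite ?/adjk ?tagX ?tagY; repeat match goal with
 | H : is_true (?a \in _), L : is_true (long ?a) |- context [tag (gam ?a)] => rewrite (tagC H L)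
 | H : is_true (?a \in _), L : is_true (long ?a) |- context [root (gam ?a)] => rewrite (rootC H L)
 | H : is_true (?a \in _) |- context [tag (beta ?a)] => rewrite (tagB H)
 | H : is_true (?a \in _) |- context [root (beta ?a)] => rewrite (rootB H)
 | H : is_true (?a \in _) |- context [tag ?a] => rewrite (tagA H)
 | H : is_true (?a \in _) |- context [root ?a] => rewrite (rootA H)
 end.

Lemma adjE u v : e u v = adjk u v.
Proof.
case: (kindP u) => [||a Ha|a Ha|a Ha La]; case: (kindP v) => [||b Hb|b Hb|b Hb Lb]; tsimp.
- by rewrite eirr.
- exact: exy.
- by rewrite ex (negbTE (Nny Hb)).
- by rewrite ex (negbTE (Sny Hb (inB Hb))).
- by rewrite ex (negbTE (Sny Hb (inC Hb Lb))).
- by rewrite esym ex eqxx.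
- by rewrite eirr.
- exact: eyN.
- by apply/negbTE/negP => /(yS Hb (inB Hb))/eqP; rewrite (negbTE (nBA Hb)).
- by apply/negbTE/negP => /(yS Hb (inC Hb Lb))/eqP; rewrite (negbTE (nCA Hb Lb)).
- by rewrite esym ex (negbTE (Nny Ha)).
- by rewrite esym eyN.
- by apply/negbTE/negP => h; have E := cross Ha Hb (inA a) (inA b) h; subst; rewrite eirr in h.
- by apply/idP/eqP => [h|E]; [exact: cross Ha Hb (inA a) (inB Hb) h | subst; exact: eAB Ha].
- apply/negbTE/negP => h; have E := cross Ha Hb (inA a) (inC Hb Lb) h; subst.
  by move: (nAC Hb Lb); rewrite h.
- by rewrite esym ex (negbTE (Sny Ha (inB Ha))).
- by apply/negbTE/negP; rewrite esym => /(yS Ha (inB Ha))/eqP; rewrite (negbTE (nBA Ha)).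
- by apply/idP/eqP => [h|E]; [exact: cross Ha Hb (inB Ha) (inA b) h | subst; rewrite esym eAB].
- by apply/negbTE/negP => h; have E := cross Ha Hb (inB Ha) (inB Hb) h; subst; rewrite eirr in h.
- by apply/idP/eqP => [h|E]; [exact: cross Ha Hb (inB Ha) (inC Hb Lb) h | subst; exact: eBC Hb Lb].
- by rewrite esym ex (negbTE (Sny Ha (inC Ha La))).
- by apply/negbTE/negP; rewrite esym => /(yS Ha (inC Ha La))/eqP; rewrite (negbTE (nCA Ha La)).
- apply/negbTE/negP => h; have E := cross Ha Hb (inC Ha La) (inA b) h; subst b.
  by move: (nAC Ha La); rewrite esym h.
- by apply/idP/eqP => [h|E]; [exact: cross Ha Hb (inC Ha La) (inB Hb) h | subst; rewrite esym eBC].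
- by apply/negbTE/negP => h; have E := cross Ha Hb (inC Ha La) (inC Hb Lb) h; subst; rewrite eirr in h.
Qed.


Lemma cardN : 2 <= #|Nb|.
Proof.
move: dy; rewrite /deg (cardsD1 x) inE esym exy /=.
have -> : [set w | e y w] :\ x = Nb by apply/setP => w; rewrite !inE andbC.
by rewrite add1n.
Qed.

Lemma next_neq (s : seq T) a : uniq s -> 2 <= size s -> a \in s -> next s a != a.
Proof.
rewrite next_nth; case: s => [|z q] //= /andP[zq uq] hs aS; rewrite aS.
case: (eqVneq z a) => [E|za].
- subst z; case: q zq uq hs aS => [|w q] //= zq _ _ _.
  by apply/eqP => E; subst w; rewrite inE eqxx in zq.
- idtac.
  have aq : a \in q by move: aS; rewrite inE eq_sym (negbTE za).
  case: (ltnP (index a q).+1 (size q)) => [lt|ge].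
  + apply/eqP => E.
    have := nth_uniq z (ltnW lt) lt uq.
    rewrite E nth_index //.
    by rewrite eqxx eqn_leq ltnn andbF.
  + by rewrite (nth_default z ge).
Qed.

Definition sN := enum Nb.
Definition pi a := next sN a.
Lemma piN a : a \in Nb -> pi a \in Nb.
Proof. by rewrite -mem_enum /pi mem_next mem_enum. Qed.
Lemma pi_prev a : prev sN (pi a) = a.
Proof. by rewrite /pi prev_next // enum_uniq. Qed.
Lemma pi_neq a : a \in Nb -> pi a != a.
Proof.
move=> Ha; apply: next_neq; first exact: enum_uniq.
- by rewrite -cardE cardN.
- by rewrite mem_enum.
Qed.

Definition a0 := odflt y [pick a in Nb].
Lemma a0N : a0 \in Nb.
Proof.
rewrite /a0; case: pickP => [a //|none].
by move: cardN; rewrite (eq_card0 none).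
Qed.

Definition sf v := if v == x then y else if v == y then beta a0 else
  if tag v == 2 then (if pi v == a0 then x else beta (pi v))
  else if tag v == 3 then (if long (root v) then gam (root v) else root v)
  else root v.

Definition tau w := if w == y then x else if w == x then prev sN a0 else
  if tag w == 2 then (if long w then gam w else beta w)
  else if tag w == 3 then (if root w == a0 then y else prev sN (root w))
  else beta (root w).

Lemma tagx_eq v : (v == x) = (tag v == 0).
Proof.
apply/eqP/eqP => [->|]; first exact: tagX.
by rewrite /tag; case: ifP => [/eqP //|_]; case: ifP => _ //; case: ifP => _ //; case: ifP.
Qed.
Lemma tagy_eq v : (v == y) = (tag v == 1).
Proof.
apply/eqP/eqP => [->|]; first exact: tagY.
by rewrite /tag; case: ifP => _ //; case: ifP => [/eqP //|_]; case: ifP => _ //; case: ifP.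
Qed.

Ltac tsimp2 := rewrite ?tagx_eq ?tagy_eq; tsimp.

Lemma sfX : sf x = y. Proof. by rewrite /sf eqxx. Qed.
Lemma sfY : sf y = beta a0. Proof. by rewrite /sf eq_sym (negbTE xny) eqxx. Qed.
Lemma sfA a : a \in Nb -> sf a = if pi a == a0 then x else beta (pi a).
Proof. by move=> Ha; rewrite /sf tagx_eq tagy_eq; tsimp. Qed.
Lemma sfB a : a \in Nb -> sf (beta a) = if long a then gam a else a.
Proof. by move=> Ha; rewrite /sf tagx_eq tagy_eq; tsimp. Qed.
Lemma sfC a : a \in Nb -> long a -> sf (gam a) = a.
Proof. by move=> Ha La; rewrite /sf tagx_eq tagy_eq; tsimp. Qed.

Lemma tau_sf : cancel sf tau.
Proof.
move=> v; have H0 := a0N.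
case: (kindP v) => [|| a Ha | a Ha | a Ha La].
- by rewrite sfX /tau eqxx.
- by rewrite sfY /tau tagx_eq tagy_eq; tsimp; rewrite /= eqxx.
- have Hp := piN Ha; rewrite sfA //; case: ifP => [/eqP E|E].
  + by rewrite /tau (negbTE xny) eqxx -E pi_prev.
  + by rewrite /tau tagx_eq tagy_eq; tsimp; rewrite /=; rewrite E pi_prev.
- rewrite sfB //; case: ifP => L.
  + by rewrite /tau tagx_eq tagy_eq; tsimp; rewrite /=.
  + by rewrite /tau tagx_eq tagy_eq; tsimp; rewrite /=; rewrite L.
- by rewrite sfC // /tau tagx_eq tagy_eq; tsimp; rewrite /=; rewrite La.
Qed.


Lemma card6 : 6 <= #|T|.
Proof.
have H0 := a0N; have H1 := piN H0.
set s := [:: x; y; a0; beta a0; pi a0; beta (pi a0)].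
have U : uniq s.
  apply: (@map_uniq _ _ (fun v => (tag v, root v))).
  rewrite /s /=; tsimp; rewrite !inE !xpair_eqE /= (eq_sym a0 (pi a0)) (negbTE (pi_neq H0)).
  by [].
have := max_card (mem s); rewrite (card_uniqP U).
by [].
Qed.

Lemma walk_path u p : path e u p -> walkn e (size p) u (last u p).
Proof.
elim: p u => [|z p IH] u /=; first by rewrite eqxx.
by case/andP => h hp; apply/existsP; exists z; rewrite h IH.
Qed.

Lemma dist_path u v p : path e u p -> last u p = v -> size p <= 5 -> dist e u v <= size p.
Proof.
move=> hp hl hs; have W := walk_path hp; rewrite hl in W.
have lt : size p < #|T| by apply: leq_ltn_trans hs card6.
rewrite /dist leqNgt; apply/negP => /(before_find 0).
by rewrite nth_iota // add0n W.
Qed.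

Lemma dist_pos u v : u != v -> 0 < dist e u v.
Proof.
move=> uv; rewrite /dist; have := card6; case: #|T| => // n _ /=.
by rewrite (negbTE uv).
Qed.

Ltac ee := first
 [ exact: exy | by rewrite esym exy
 | match goal with H : is_true (?a \in _) |- is_true (e y ?a) => exact: (eyN H) end
 | match goal with H : is_true (?a \in _) |- is_true (e ?a y) => by rewrite esym (eyN H) end
 | match goal with H : is_true (?a \in _) |- is_true (e ?a (beta ?a)) => exact: (eAB H) end
 | match goal with H : is_true (?a \in _) |- is_true (e (beta ?a) ?a) => by rewrite esym (eAB H) end
 | match goal with H : is_true (?a \in _), L : is_true (long ?a) |- is_true (e (beta ?a) (gam ?a)) => exact: (eBC H L) end
 | match goal with H : is_true (?a \in _), L : is_true (long ?a) |- is_true (e (gam ?a) (beta ?a)) => by rewrite esym (eBC H L) end ].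

Ltac dpath p := apply: leq_trans (dist_path (p := p) _ _ _) _;
  [rewrite /= ?andbT; repeat (apply/andP; split); ee | done | done | done].

Lemma edge_good u v : e u v -> ~~ e (sf u) (sf v) && (dist e (sf u) (sf v) <= 5).
Proof.
have H0 := a0N.
rewrite adjE; case: (kindP u) => [||a Ha|a Ha|a Ha La]; case: (kindP v) => [||b Hb|b Hb|b Hb Lb]; tsimp; try done.
- by move=> _; rewrite sfX sfY adjE; tsimp; rewrite /=; dpath [:: a0; beta a0].
- by move=> _; rewrite sfX sfY adjE; tsimp; rewrite /=; dpath [:: a0; y].
- move=> _; have Hp := piN Hb; rewrite sfY (sfA Hb); case: (boolP (pi b == a0)) => E; rewrite adjE; tsimp; rewrite /=.
  + by dpath [:: a0; y; x].
  + by dpath [:: a0; y; pi b; beta (pi b)].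
- move=> _; have Hp := piN Ha; rewrite sfY (sfA Ha); case: (boolP (pi a == a0)) => E; rewrite adjE; tsimp; rewrite /=.
  + by dpath [:: y; a0; beta a0].
  + by dpath [:: pi a; y; a0; beta a0].
- move/eqP => E; subst b; have Hp := piN Ha; have Hn := negbTE (pi_neq Ha).
  rewrite (sfA Ha) (sfB Ha); case: (boolP (long a)) => L; case: (boolP (pi a == a0)) => E;
    rewrite adjE; tsimp; rewrite /= ?Hn.
  + by dpath [:: y; a; beta a; gam a].
  + by dpath [:: pi a; y; a; beta a; gam a].
  + by dpath [:: y; a].
  + by dpath [:: pi a; y; a].
- move/eqP => E; subst b; have Hp := piN Ha; have Hn := negbTE (pi_neq Ha).
  rewrite (sfA Ha) (sfB Ha); case: (boolP (long a)) => L; case: (boolP (pi a == a0)) => E;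
    rewrite adjE; tsimp; rewrite /= ?(eq_sym a (pi a)) ?Hn.
  + by dpath [:: beta a; a; y; x].
  + by dpath [:: beta a; a; y; pi a; beta (pi a)].
  + by dpath [:: y; x].
  + by dpath [:: y; pi a; beta (pi a)].
- move/eqP => E; subst b.
  by rewrite (sfB Ha) (sfC Ha Lb) Lb adjE; tsimp; rewrite /=; dpath [:: beta a; a].
- move/eqP => E; subst b.
  by rewrite (sfB Ha) (sfC Ha La) La adjE; tsimp; rewrite /=; dpath [:: beta a; gam a].
Qed.



Lemma main : exists sigma : {perm T}, good_2placement e x sigma.
Proof.
have H0 := a0N.
exists (perm (can_inj tau_sf)); split.
  move=> v; rewrite permE; apply/eqP => /(congr1 tag).
  case: (kindP v) => [||a Ha|a Ha|a Ha La].
  - by rewrite sfX tagX tagY.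
  - by rewrite sfY; tsimp.
  - have Hp := piN Ha; rewrite (sfA Ha); case: ifP => _; by tsimp.
  - rewrite (sfB Ha); case: (boolP (long a)) => L; by tsimp.
  - by rewrite (sfC Ha La); tsimp.
split.
- by move=> a b h; rewrite !permE; case/andP: (edge_good h).
- by move=> a b h; rewrite !permE; case/andP: (edge_good h).
- rewrite permE sfX; apply/eqP; rewrite eqn_leq dist_pos ?xny // andbT.
  by dpath [:: y].
- by move=> w /x_nbr ->; rewrite permE sfY; dpath [:: a0; beta a0].
- move=> w _; rewrite permE; case: (kindP w) => [||a Ha|a Ha|a Ha La].
  + by rewrite sfX; dpath [:: y].
  + by rewrite sfY; dpath [:: a0; beta a0].
  + have Hp := piN Ha; rewrite (sfA Ha); case: ifP => _.
    * by dpath [:: y; x].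
    * by dpath [:: y; pi a; beta (pi a)].
  + rewrite (sfB Ha); case: (boolP (long a)) => L.
    * by dpath [:: gam a].
    * by dpath [:: a].
  + by rewrite (sfC Ha La); dpath [:: beta a; a].
Qed.

End S.

Theorem lemma3p10 (T : finType) (e : rel T) (x y : T) :
  is_tree e -> ~ is_star e ->
  e x y -> deg e x = 1 -> 3 <= deg e y ->
  (forall y' : T, e y y' -> y' != x ->
     neighbor_F_tree e y' y /\ #|Tcomp e y' y| != 1) ->
  exists sigma : {perm T}, good_2placement e x sigma.
Proof.
move=> tr _ h1 h2 h3 h4.
exact: (main tr h1 h2 h3 h4).
Qed.
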